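(* Let $G$ be a finite group acting linearly, isometrically and effectively on $\mathbb{R}^n$, let $X$ be a random variable with $\mathbb{E}(\|X\|^2)<+\infty$ and $t_0=\mathbb{E}(X)$ a regular point. If the support of the law of $X$ is a compact set contained in the interior of $\mathrm{Cone}(t_0)$, then $t_0$ is a local minimiser of $F$ (i.e. $[t_0]$ is a Karcher mean of $[X]$).
   Context: A group action is linear and isometric if each $x\mapsto g\cdot x$ is linear with $\|g\cdot x\|=\|x\|$, and effective if $x\mapsto g\cdot x$ is the identity only for $g=e_G$. A point $m$ is regular if $\{g: g\cdot m=m\}=\{e_G\}$. For regular $m$, $\mathrm{Cone}(m)=\{x: \|x-m\|\le\|x-g\cdot m\| \ \forall g\in G\}$. The support of $X$ is the set of $x$ with $\mathbb{P}(X\in B(x,r))>0$ for all $r>0$. $F(m)=\mathbb{E}\big(\min_{g\in G}\|g\cdot X-m\|^2\big)$. *)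

(* Defs.v *)
(* R^n is modelled as row vectors 'rV[R]_n with the
   Euclidean norm defined below (the library's default norm on matrices is the
   sup-norm; it induces the same topology, which we use for compact/interior/near). *)
From HB Require Import structures.
From mathcomp Require Import all_boot all_order all_algebra all_fingroup.
From mathcomp Require Import all_classical all_reals all_analysis.
Set Implicit Arguments. Unset Strict Implicit. Unset Printing Implicit Defensive.
Import Order.TTheory GRing.Theory Num.Theory.
Import numFieldNormedType.Exports.
Local Open Scope classical_set_scope.
Local Open Scope ring_scope.

Definition enorm (R : realType) (n : nat) (x : 'rV[R]_n) : R :=
  Num.sqrt (\sum_(i < n) x ord0 i ^+ 2).

Definition is_group_action (R : realType) (n : nat) (gT : finGroupType)
  (act : gT -> 'rV[R]_n -> 'rV[R]_n) : Prop :=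
  (forall x, act 1%g x = x) /\
  (forall g h x, act (g * h)%g x = act g (act h x)).

Definition linear_action (R : realType) (n : nat) (gT : finGroupType)
  (act : gT -> 'rV[R]_n -> 'rV[R]_n) : Prop :=
  forall g (a : R) x y, act g (a *: x + y) = a *: act g x + act g y.

Definition isometric_action (R : realType) (n : nat) (gT : finGroupType)
  (act : gT -> 'rV[R]_n -> 'rV[R]_n) : Prop :=
  forall g x, enorm (act g x) = enorm x.

Definition effective_action (R : realType) (n : nat) (gT : finGroupType)
  (act : gT -> 'rV[R]_n -> 'rV[R]_n) : Prop :=
  forall g, (forall x, act g x = x) -> g = 1%g.

Definition regular_point (R : realType) (n : nat) (gT : finGroupType)
  (act : gT -> 'rV[R]_n -> 'rV[R]_n) (m : 'rV[R]_n) : Prop :=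
  forall g, act g m = m -> g = 1%g.

Definition Cone (R : realType) (n : nat) (gT : finGroupType)
  (act : gT -> 'rV[R]_n -> 'rV[R]_n) (m : 'rV[R]_n) : set 'rV[R]_n :=
  [set x | forall g : gT, enorm (x - m) <= enorm (x - act g m)].

Definition law_support (d : measure_display) (T : measurableType d)
  (R : realType) (P : probability T R) (n : nat) (X : T -> 'rV[R]_n)
  : set 'rV[R]_n :=
  [set x | forall r : R, 0 < r -> (0 < P [set w | (enorm (X w - x) < r)%R])%E].

(* min_{g in G} ||g.x - m||^2 (the big min is seeded with the value at g = 1,
   which belongs to the index set, so it is the true minimum) *)
Definition min_orbit_dist2 (R : realType) (n : nat) (gT : finGroupType)
  (act : gT -> 'rV[R]_n -> 'rV[R]_n) (x m : 'rV[R]_n) : R :=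
  \big[Num.min/enorm (x - m) ^+ 2]_(g : gT) (enorm (act g x - m) ^+ 2).

Definition Fmean (d : measure_display) (T : measurableType d)
  (R : realType) (P : probability T R) (n : nat) (gT : finGroupType)
  (act : gT -> 'rV[R]_n -> 'rV[R]_n) (X : T -> 'rV[R]_n) (m : 'rV[R]_n)
  : \bar R :=
  'E_P[fun w => min_orbit_dist2 act (X w) m].

(* Main.v *)
Require Import Defs.
From HB Require Import structures.
From mathcomp Require Import all_boot all_order all_algebra all_fingroup.
From mathcomp Require Import all_classical all_reals all_analysis.
From mathcomp Require Import measurable_realfun.
From mathcomp Require Import ring lra.
Import Order.TTheory GRing.Theory Num.Theory.
Import numFieldNormedType.Exports.
Local Open Scope classical_set_scope.
Local Open Scope ring_scope.
Set Implicit Arguments. Unset Strict Implicit. Unset Printing Implicit Defensive.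
Section Aux.
Variables (R : realType) (n : nat).
Implicit Types x y z : 'rV[R]_n.

Definition sq x : R := \sum_(i < n) x ord0 i ^+ 2.
Definition dot x y : R := \sum_(i < n) x ord0 i * y ord0 i.

Lemma sq_ge0 x : 0 <= sq x.
Proof. by apply: sumr_ge0 => i _; rewrite sqr_ge0. Qed.

Lemma enorm_sq x : enorm x ^+ 2 = sq x.
Proof. by rewrite /enorm sqr_sqrtr // sq_ge0. Qed.

Lemma sqB x y : sq (x - y) = sq x - 2 * dot x y + sq y.
Proof.
rewrite /sq /dot mulr_sumr -sumrN -!big_split /=; apply: eq_bigr => i _.
rewrite !mxE; ring.
Qed.

Lemma sqD x y : sq (x + y) = sq x + 2 * dot x y + sq y.
Proof.
rewrite /sq /dot mulr_sumr -!big_split /=; apply: eq_bigr => i _.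
rewrite !mxE; ring.
Qed.

Lemma dotBr x y z : dot x (y - z) = dot x y - dot x z.
Proof.
rewrite /dot -sumrN -big_split /=; apply: eq_bigr => i _; rewrite !mxE; ring.
Qed.

Lemma enorm_le x y : (enorm x <= enorm y) = (sq x <= sq y).
Proof. by rewrite /enorm ler_sqrt // sq_ge0. Qed.

End Aux.
Section Act.
Variables (R : realType) (n : nat) (gT : finGroupType)
  (act : gT -> 'rV[R]_n -> 'rV[R]_n).
Hypothesis Hgrp : is_group_action act.
Hypothesis Hlin : linear_action act.
Hypothesis Hiso : isometric_action act.
Implicit Types x y z m : 'rV[R]_n.

Lemma act0 g : act g 0 = 0.
Proof.
have := Hlin g 1 0 0; rewrite scaler0 !addr0 scale1r -{1}[act g 0]addr0 => h.
by apply: (addrI (act g 0)); rewrite -h.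
Qed.

Lemma actD g x y : act g (x + y) = act g x + act g y.
Proof. by have := Hlin g 1 x y; rewrite !scale1r. Qed.

Lemma actZ g a x : act g (a *: x) = a *: act g x.
Proof. by have := Hlin g a x 0; rewrite !addr0 act0 addr0. Qed.

Lemma actB g x y : act g (x - y) = act g x - act g y.
Proof. by rewrite actD -scaleN1r actZ scaleN1r. Qed.

Lemma act_sq g x : sq (act g x) = sq x.
Proof. by rewrite -!enorm_sq Hiso. Qed.

Lemma act_sum g (s : seq 'I_n) (F : 'I_n -> 'rV[R]_n) :
  act g (\sum_(i <- s) F i) = \sum_(i <- s) act g (F i).
Proof. exact: (big_morph (act g) (actD g) (act0 g)). Qed.

Lemma act_coord g x j :
  act g x ord0 j = \sum_(i < n) x ord0 i * act g (delta_mx ord0 i) ord0 j.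
Proof.
have -> : x = \sum_(i < n) x ord0 i *: (delta_mx ord0 i : 'rV[R]_n).
  apply/rowP => k; rewrite summxE (bigD1 k) //= big1 ?addr0.
    by rewrite !mxE !eqxx mulr1.
  by move=> i ik; rewrite !mxE eqxx /= eq_sym (negbTE ik) mulr0.
rewrite act_sum summxE; apply: eq_bigr => i _.
by rewrite actZ mxE; congr (_ * _); rewrite summxE (bigD1 i) //= big1 ?addr0 ?mxE ?eqxx ?mulr1 // => k ki; rewrite !mxE eqxx /= eq_sym (negbTE ki) mulr0.
Qed.

Lemma cone_dot x m g :
  (enorm (x - m) <= enorm (x - act g m)) = (dot x (act g m - m) <= 0).
Proof.
rewrite enorm_le !sqB act_sq dotBr.
apply/idP/idP => h; lra.
Qed.

Lemma min_cone x m :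
  (forall g, enorm (x - m) <= enorm (x - act g m)) ->
  min_orbit_dist2 act x m = sq (x - m).
Proof.
move=> hc; rewrite /min_orbit_dist2 enorm_sq.
have key : forall g, sq (x - m) <= enorm (act g x - m) ^+ 2.
  move=> g; rewrite enorm_sq.
  have -> : act g x - m = act g (x - act g^-1 m).
    by rewrite actB -(proj2 Hgrp) mulgV (proj1 Hgrp).
  by rewrite act_sq -enorm_le hc.
elim: (index_enum gT) => [|g s ih]; first by rewrite big_nil.
rewrite big_cons; apply/le_anti/andP; split.
  by rewrite ge_min ih lexx orbT.
by rewrite le_min key ih lexx.
Qed.

End Act.
Section Near.
Variables (R : realType) (n : nat).
Implicit Types x y v w : 'rV[R]_n.

Lemma dot_cont_s v (s : seq 'I_n) :
  continuous (fun x : 'rV[R]_n => \sum_(i <- s) x ord0 i * v ord0 i).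
Proof.
elim: s => [|i s ih].
  under eq_fun do rewrite big_nil.
  exact: cst_continuous.
under eq_fun do rewrite big_cons.
move=> x; apply: (@continuousD _ _ _ (fun x : 'rV[R]_n => x ord0 i * v ord0 i)); last exact: ih.
apply: (@continuousM _ _ (fun x : 'rV[R]_n => x ord0 i) (fun=> v ord0 i)).
  exact: coord_continuous.
exact: cst_continuous.
Qed.

Lemma dot_cont v : continuous (fun x : 'rV[R]_n => dot x v).
Proof. exact: dot_cont_s. Qed.

Lemma coord_le_norm x i : `|x ord0 i| <= `|x|.
Proof.
by rewrite [leRHS]/Num.Def.normr /= mx_normrE; apply/bigmax_geP; right => /=; exists (ord0, i).
Qed.

Lemma sq_gt0 v : v != 0 -> 0 < sq v.
Proof.
move=> v0; rewrite lt_def sq_ge0 andbT; apply: contra v0 => /eqP h.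
apply/eqP/rowP => i; rewrite mxE.
have hh : v ord0 i ^+ 2 = 0.
  by apply: (psumr_eq0P _ h) => // j _; exact: sqr_ge0.
by move/eqP: hh; rewrite sqrf_eq0 => /eqP.
Qed.

Lemma dotDZl x v e : dot (x + e *: v) v = dot x v + e * sq v.
Proof.
rewrite /dot /sq mulr_sumr -big_split; apply: eq_bigr => i _; rewrite !mxE /=; ring.
Qed.

Lemma dot_bound x w (B : R) (C : 'I_n -> R) :
  (forall j, `|x ord0 j| <= B) -> (forall j, `|w ord0 j| <= C j) ->
  `|dot x w| <= \sum_j B * C j.
Proof.
move=> hx hw; rewrite /dot; apply: le_trans (ler_norm_sum _ _ _) _.
apply: ler_sum => j _; rewrite normrM; apply: ler_pM => //.
Qed.

End Near.
Section NearCone.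
Variables (R : realType) (n : nat) (gT : finGroupType)
  (act : gT -> 'rV[R]_n -> 'rV[R]_n) (t0 : 'rV[R]_n).
Hypothesis Hgrp : is_group_action act.
Hypothesis Hlin : linear_action act.
Hypothesis Hiso : isometric_action act.
Implicit Types x y v w m : 'rV[R]_n.

Lemma strict_dot x g : interior (Cone act t0) x -> act g t0 != t0 ->
  dot x (act g t0 - t0) < 0.
Proof.
move=> /nbhs_ballP [e /= e0 he] hv; set v := act g t0 - t0.
have v0 : v != 0 by rewrite subr_eq0.
have sv := sq_gt0 v0.
pose k := e / (2 * (`|v| + 1)).
have nv : 0 <= `|v| by [].
have k0 : 0 < k by rewrite /k divr_gt0 // mulr_gt0 // ltr_wpDl.
have hk : k * `|v| + k = e / 2.
  by rewrite /k; field; rewrite lt0r_neq0 // ltr_wpDl.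
have : Cone act t0 (x + k *: v).
  apply: he; rewrite -ball_normE /= opprD addrA subrr add0r normrN normrZ.
  by rewrite gtr0_norm //; lra.
move/(_ g); rewrite cone_dot // dotDZl => h.
nra.
Qed.

Lemma coord_w g u j :
  `|(act g u - u) ord0 j| <=
    `|u| * (\sum_(k < n) `|act g (delta_mx ord0 k) ord0 j| + 1).
Proof.
rewrite !mxE act_coord //.
apply: le_trans (ler_normB _ _) _.
rewrite mulrDr mulr1 lerD ?coord_le_norm //.
apply: le_trans (ler_norm_sum _ _ _) _.
rewrite mulr_sumr; apply: ler_sum => k _; rewrite normrM.
by apply: ler_wpM2r => //; exact: coord_le_norm.
Qed.

Lemma near_cone_g (S : set 'rV[R]_n) g :
  compact S -> S `<=` interior (Cone act t0) -> regular_point act t0 ->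
  \forall m \near t0, forall x, S x -> enorm (x - m) <= enorm (x - act g m).
Proof.
move=> cS Sint reg.
have [ht|hv] := eqVneq (act g t0) t0.
  rewrite (reg g ht); apply/nbhs_ballP; exists 1; first exact: ltr01.
  by move=> m _ x _; rewrite (proj1 Hgrp).
have [Sne|S0] := pselect (S !=set0); last first.
  apply/nbhs_ballP; exists 1; first exact: ltr01.
  by move=> m _ x Sx; exfalso; apply: S0; exists x.
set v := act g t0 - t0.
have cf : {within S, continuous (fun x => dot x v)}.
  by apply: continuous_subspaceT; exact: dot_cont.
have [c cS' hc] := compact_EVT_max Sne cS cf.
have dc : dot c v < 0 by apply: strict_dot => //; apply: Sint; rewrite -inE.
have [M [_ HM]] := compact_bounded cS.
set B := `|M| + 1.
have hB : forall x, S x -> forall j, `|x ord0 j| <= B.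
  move=> x Sx j; apply: le_trans (coord_le_norm _ _) _.
  apply: (HM B) => //; rewrite /B; apply: le_lt_trans (ler_norm M) _; lra.
set Kj := fun j => \sum_(k < n) `|act g (delta_mx ord0 k) ord0 j| + 1.
set K := \sum_j Kj j.
have K0 : 0 <= K by apply: sumr_ge0 => j _; rewrite /Kj; apply: addr_ge0 => //; apply: sumr_ge0.
have B0 : 0 < B by rewrite /B; apply: ltr_wpDl.
set eta := (- dot c v) / (B * K + 1).
have eta0 : 0 < eta.
  by rewrite /eta divr_gt0 ?oppr_gt0 // ltr_wpDl // mulr_ge0 // ltW.
have heta : eta * (B * K + 1) = - dot c v.
  by rewrite /eta mulfVK // lt0r_neq0 // ltr_wpDl // mulr_ge0 // ltW.
apply/nbhs_ballP; exists eta => // m; rewrite -ball_normE /= => hm x Sx.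
rewrite cone_dot //.
set u := t0 - m.
have -> : act g m - m = v - (act g u - u).
  by rewrite /v /u !actB //; apply/rowP => j; rewrite !mxE /=; ring.
rewrite dotBr.
have hx : dot x v <= dot c v by apply: hc; rewrite inE.
have hw : `|dot x (act g u - u)| <= \sum_j B * (`|u| * Kj j).
  by apply: dot_bound => j; [exact: hB | exact: coord_w].
have e1 : \sum_j B * (`|u| * Kj j) = B * (`|u| * K) by rewrite /K !mulr_sumr.
rewrite e1 in hw.
have := lerNnormlW hw.
have nu : 0 <= `|u| by [].
nra.
Qed.

End NearCone.
Section Negl.
Variables (R : realType) (n : nat) (d : measure_display) (T : measurableType d)
  (P : probability T R) (X : T -> 'rV[R]_n).
Hypothesis mX : forall i : 'I_n, measurable_fun setT (fun w => X w ord0 i).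

Lemma meas_sq (y : 'rV[R]_n) : measurable_fun setT (fun w => sq (X w - y)).
Proof.
have -> : (fun w => sq (X w - y)) =
    (fun w => \sum_(i <- index_enum 'I_n) (X w ord0 i - y ord0 i) ^+ 2).
  by apply: funext => w; rewrite /sq; apply: eq_bigr => i _; rewrite !mxE.
apply: measurable_sum => i; apply: measurable_funX; apply: measurable_funB => //.
Qed.

Lemma meas_lt (f : T -> R) (r : R) : measurable_fun setT f ->
  measurable [set w | f w < r].
Proof.
move=> mf.
have -> : [set w | f w < r] = setT `&` f @^-1` `]-oo, r[%classic.
  by apply/seteqP; split => w /=; rewrite ?in_itv /= ?andbT //; move=> [_].
exact: mf.
Qed.

Lemma sq_tri (a b c : 'rV[R]_n) : sq (a - c) <= 2 * sq (a - b) + 2 * sq (b - c).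
Proof.
rewrite /sq !mulr_sumr -big_split /=; apply: ler_sum => i _; rewrite !mxE.
set u := a ord0 i; set v := b ord0 i; set z := c ord0 i.
have h : 0 <= (u - 2 * v + z) ^+ 2 by apply: sqr_ge0.
nra.
Qed.

Lemma sq_sym (a b : 'rV[R]_n) : sq (a - b) = sq (b - a).
Proof. by rewrite -opprB /sq; apply: eq_bigr => i _; rewrite mxE sqrrN. Qed.

Definition eps (k : nat) : R := (k.+1%:R)^-1.
Definition cen (q : 'rV[rat]_n) : 'rV[R]_n := map_mx (@ratr R) q.
Definition Abox (qk : 'rV[rat]_n * nat) : set T :=
  [set w | sq (X w - cen qk.1) < eps qk.2].
Definition QK := ('rV[rat]_n * nat)%type.
Definition Fnull (N : nat) : set T :=
  match @unpickle QK N with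
  | Some qk => if (P (Abox qk) == 0)%E then Abox qk else set0
  | None => set0
  end.

Lemma Fnull_negl N : P.-negligible (Fnull N).
Proof.
rewrite /Fnull; case: (unpickle N) => [qk|]; last exact: negligible_set0.
case: ifPn => [/eqP h|_]; last exact: negligible_set0.
by exists (Abox qk); split => //; apply: meas_lt; apply: meas_sq.
Qed.

Lemma approx_rat (x : 'rV[R]_n) k : exists q, sq (x - cen q) < eps k.
Proof.
set e := eps k; set dl := e / (n.+1%:R).
have e0 : 0 < e by rewrite /e /eps invr_gt0.
have e1 : e <= 1 by rewrite /e /eps invf_le1 // ler1n.
have dl0 : 0 < dl by rewrite /dl divr_gt0.
have hed : e = (n%:R + 1) * dl by rewrite /dl -natr1 mulrC divfK.
have n0 : (0:R) <= n%:R by [].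
have dl1 : dl <= 1 by nra.
have : forall i : 'I_n, exists q : rat, ratr q \in `](x ord0 i - dl), (x ord0 i + dl)[.
  move=> i; apply: rat_in_itvoo; lra.
move/choice => [f hf]; exists (\row_i f i).
have hs : sq (x - cen (\row_i f i)) <= \sum_(i < n) dl.
  apply: ler_sum => i _; rewrite !mxE.
  move: (hf i); rewrite in_itv /= => /andP[h1 h2].
  have h3 : 0 < (ratr (f i) - x ord0 i + dl) * (x ord0 i + dl - ratr (f i)).
    by apply: mulr_gt0; lra.
  have h4 : dl * dl <= dl by nra.
  rewrite expr2; nra.
apply: le_lt_trans hs _; rewrite sumr_const card_ord -mulr_natl.
nra.
Qed.

Lemma support_ae : P.-negligible [set w | ~ law_support P X (X w)].
Proof.
apply: (negligibleS _ (negligible_bigcup Fnull_negl)).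
move=> w /= nS; apply: contrapT => ncov; apply: nS => r r0.
rewrite lt0e measure_ge0 andbT; apply/negP => /eqP PB0; apply: ncov.
set x := X w.
have [k hk] : exists k : nat, 4 / r ^+ 2 < k.+1%:R.
  by exists (Num.truncn (4 / r ^+ 2)); rewrite truncnS_gt.
have [q hq] := approx_rat x k.
exists (@pickle QK (q, k)); [exact: I|].
rewrite /Fnull pickleK.
have hA : Abox (q, k) w by exact: hq.
suff -> : (P (Abox (q, k)) == 0)%E by [].
have mB : measurable [set w' | sq (X w' - x) < r ^+ 2] by apply: meas_lt; exact: meas_sq.
have eB : [set w' | sq (X w' - x) < r ^+ 2] = [set w' | enorm (X w' - x) < r].
  apply/seteqP; split => w' /=; have := enorm_sq (X w' - x);
    have : 0 <= enorm (X w' - x) by rewrite /enorm sqrtr_ge0.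
    by move=> h1 h2 h3; nra.
  by move=> h1 h2 h3; nra.
have sub : Abox (q, k) `<=` [set w' | sq (X w' - x) < r ^+ 2].
  move=> w' /=; rewrite /Abox /= => h.
  have := sq_tri (X w') (cen q) x.
  have hk' : 4 * eps k <= r ^+ 2.
    have K0 : (0 : R) < k.+1%:R by [].
    rewrite /eps -[4 * _]/(4 / k.+1%:R) ler_pdivrMr //.
    move: hk; rewrite ltr_pdivrMr ?exprn_gt0 // => hk; rewrite mulrC ltW //.
  have := hq; rewrite sq_sym; lra.
apply/eqP/le_anti; rewrite measure_ge0 andbT -PB0 -eB.
by apply: le_measure => //; rewrite inE //; apply: meas_lt; apply: meas_sq.
Qed.

End Negl.
Section Integ.
Variables (R : realType) (n : nat) (d : measure_display) (T : measurableType d)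
  (P : probability T R) (X : T -> 'rV[R]_n) (t0 : 'rV[R]_n).
Hypothesis mX : forall i : 'I_n, measurable_fun setT (fun w => X w ord0 i).
Hypothesis m2 : (\int[P]_w ((enorm (X w)) ^+ 2)%:E < +oo)%E.
Hypothesis hmean : forall i : 'I_n, ('E_P[fun w => X w ord0 i] = (t0 ord0 i)%:E)%E.

Lemma expE (f : T -> R) : ('E_P[f] = \int[P]_w (f w)%:E)%E.
Proof. by rewrite unlock. Qed.

Lemma int_sqX : P.-integrable setT (fun w => (sq (X w))%:E).
Proof.
apply/integrableP; split.
  apply/measurable_EFinP.
  have := meas_sq mX 0; by under eq_fun do rewrite subr0.
under eq_integral do rewrite gee0_abs ?lee_fin ?sq_ge0 // -enorm_sq.
exact: m2.
Qed.

Lemma int_cstE (c : R) : (\int[P]_w c%:E = c%:E)%E.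
Proof. by have := expE (cst c); rewrite expectation_cst => <-. Qed.

Lemma int_cst (c : R) : P.-integrable setT (fun _ => c%:E).
Proof. exact: finite_measure_integrable_cst. Qed.

Lemma int_coord i : P.-integrable setT (fun w => (X w ord0 i)%:E).
Proof.
apply: (@le_integrable _ _ _ _ _ measurableT _ (fun w => (1%:E + (sq (X w))%:E)%E)).
- exact/measurable_EFinP.
- move=> w _; rewrite -EFinD !abse_EFin lee_fin.
  have hs : 0 <= sq (X w) by exact: sq_ge0.
  rewrite [X in _ <= X]ger0_norm; last lra.
  have hi : X w ord0 i ^+ 2 <= sq (X w).
    rewrite /sq (bigD1 i) //= lerDl; apply: sumr_ge0 => j _; exact: sqr_ge0.
  have := real_normK (num_real (X w ord0 i)); have := normr_ge0 (X w ord0 i).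
  set a := `|X w ord0 i|; move=> h0 h1.
  have : 0 <= (a - 1) ^+ 2 by exact: sqr_ge0.
  nra.
- by apply: (integrableD measurableT) => //; [exact: int_cst | exact: int_sqX].
Qed.

Lemma int_sqXm (m : 'rV[R]_n) : P.-integrable setT (fun w => (sq (X w - m))%:E).
Proof.
apply: (@le_integrable _ _ _ _ _ measurableT _ (fun w => ((2 * sq (X w))%:E + (2 * sq (0 - m))%:E)%E)).
- by apply/measurable_EFinP; exact: meas_sq.
- move=> w _; rewrite -EFinD !abse_EFin lee_fin.
  have := sq_tri (X w) 0 m; rewrite subr0.
  have := sq_ge0 (X w); have := sq_ge0 (0 - m); have := sq_ge0 (X w - m).
  move=> h1 h2 h3 h4; rewrite !ger0_norm //; lra.
- apply: (integrableD measurableT) => //; last exact: int_cst.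
  under eq_fun do rewrite EFinM.
  by apply: (integrableZl measurableT); exact: int_sqX.
Qed.

Lemma expand_sq (x m : 'rV[R]_n) :
  sq (x - m) = sq (x - t0) +
    (\sum_(i < n) (2 * (t0 ord0 i - m ord0 i)) * (x ord0 i - t0 ord0 i)
     + sq (t0 - m)).
Proof.
rewrite /sq -!big_split; apply: eq_bigr => i _; rewrite !mxE /=; ring.
Qed.

Lemma int_linf (c : R) i :
  P.-integrable setT (fun w => ((c * (X w ord0 i - t0 ord0 i))%:E)).
Proof.
under eq_fun do rewrite EFinM EFinB.
apply: (integrableZl measurableT).
apply: (integrableB measurableT); [exact: int_coord | exact: int_cst].
Qed.

Lemma int_sumf (s : seq 'I_n) (c : 'I_n -> R) :
  P.-integrable setT (fun w => ((\sum_(i <- s) c i * (X w ord0 i - t0 ord0 i))%:E)).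
Proof.
under eq_fun do rewrite -sumEFin.
by apply: (integrable_sum measurableT) => i _; exact: int_linf.
Qed.

Lemma int_lin (c : R) i :
  (\int[P]_w ((c * (X w ord0 i - t0 ord0 i))%:E) = 0)%E.
Proof.
under eq_integral do rewrite EFinM EFinB.
rewrite integralZl //; last first.
  by apply: (integrableB measurableT); [exact: int_coord | exact: int_cst].
rewrite integralB_EFin //; last exact: int_cst.
  by rewrite -expE hmean int_cstE subee // mule0.
exact: int_coord.
Qed.

Lemma int_sum0 (c : 'I_n -> R) :
  (\int[P]_w ((\sum_(i < n) c i * (X w ord0 i - t0 ord0 i))%:E) = 0)%E.
Proof.
under eq_integral do rewrite -sumEFin.
rewrite integral_sum //; last by move=> i; exact: int_linf.
by rewrite big1 // => i _; exact: int_lin.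
Qed.

Lemma mean_ineq (m : 'rV[R]_n) :
  (\int[P]_w (sq (X w - t0))%:E <= \int[P]_w (sq (X w - m))%:E)%E.
Proof.
under [X in (_ <= X)%E]eq_integral do rewrite expand_sq EFinD EFinD.
rewrite integralD //; last first.
  apply: (integrableD measurableT) => //; last exact: int_cst.
  exact: int_sumf.
  exact: int_sqXm.
rewrite integralD //; last exact: int_cst.
  rewrite int_cstE.
  rewrite int_sum0 add0e.
  by rewrite leeDl // lee_fin sq_ge0.
exact: int_sumf.
Qed.

End Integ.
Section Meas.
Variables (R : realType) (n : nat) (gT : finGroupType)
  (act : gT -> 'rV[R]_n -> 'rV[R]_n) (d : measure_display) (T : measurableType d)
  (X : T -> 'rV[R]_n).
Hypothesis Hlin : linear_action act.
Hypothesis mX : forall i : 'I_n, measurable_fun setT (fun w => X w ord0 i).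

Lemma meas_act g j : measurable_fun setT (fun w => act g (X w) ord0 j).
Proof.
have -> : (fun w => act g (X w) ord0 j) = (fun w =>
    \sum_(i <- index_enum 'I_n) X w ord0 i * act g (delta_mx ord0 i) ord0 j).
  by apply: funext => w; rewrite (act_coord Hlin).
by apply: measurable_sum => i; apply: measurable_funM.
Qed.

Lemma meas_term g m :
  measurable_fun setT (fun w => enorm (act g (X w) - m) ^+ 2).
Proof.
have -> : (fun w => enorm (act g (X w) - m) ^+ 2) = (fun w =>
    \sum_(j <- index_enum 'I_n) (act g (X w) ord0 j - m ord0 j) ^+ 2).
  by apply: funext => w; rewrite enorm_sq /sq; apply: eq_bigr => j _; rewrite !mxE.
apply: measurable_sum => j; apply: measurable_funX; apply: measurable_funB => //.
exact: meas_act.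
Qed.

Lemma meas_bigmin (s : seq gT) (a : T -> R) (h : gT -> T -> R) :
  measurable_fun setT a -> (forall g, measurable_fun setT (h g)) ->
  measurable_fun setT (fun w => \big[Num.min/a w]_(g <- s) h g w).
Proof.
move=> ma mh; elim: s => [|g s ih].
  by under eq_fun do rewrite big_nil.
under eq_fun do rewrite big_cons.
exact: measurable_minr.
Qed.

Lemma meas_min m : measurable_fun setT (fun w => min_orbit_dist2 act (X w) m).
Proof.
rewrite /min_orbit_dist2; apply: meas_bigmin; last by move=> g; exact: meas_term.
have -> : (fun w => enorm (X w - m) ^+ 2) = (fun w => sq (X w - m)).
  by apply: funext => w; rewrite enorm_sq.
exact: meas_sq.
Qed.

End Meas.

Lemma near_cone (R : realType) (n : nat) (gT : finGroupType)
  (act : gT -> 'rV[R]_n -> 'rV[R]_n) (t0 : 'rV[R]_n) (S : set 'rV[R]_n) :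
  is_group_action act -> linear_action act -> isometric_action act ->
  compact S -> S `<=` interior (Cone act t0) -> regular_point act t0 ->
  \forall m \near t0, forall g x, S x -> enorm (x - m) <= enorm (x - act g m).
Proof.
move=> Hgrp Hlin Hiso cS Sint reg.
apply: (@filter_forall _ gT
  (fun g m => forall x, S x -> enorm (x - m) <= enorm (x - act g m)) (nbhs t0)).
by move=> g; exact: near_cone_g.
Qed.

Theorem mainTheorem5 (R : realType) (n : nat) (gT : finGroupType)
  (act : gT -> 'rV[R]_n -> 'rV[R]_n)
  (d : measure_display) (T : measurableType d) (P : probability T R)
  (X : T -> 'rV[R]_n) (t0 : 'rV[R]_n) :
  is_group_action act -> linear_action act -> isometric_action act ->
  effective_action act ->
  (forall i : 'I_n, measurable_fun setT (fun w => X w ord0 i)) ->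
  (\int[P]_w ((enorm (X w)) ^+ 2)%:E < +oo)%E ->
  (forall i : 'I_n, ('E_P[fun w => X w ord0 i] = (t0 ord0 i)%:E)%E) ->
  regular_point act t0 ->
  compact (law_support P X) ->
  law_support P X `<=` interior (Cone act t0) ->
  \forall m \near t0, (Fmean P act X t0 <= Fmean P act X m)%E.
Proof.
move=> Hgrp Hlin Hiso Heff mX m2 hmean reg cS Sint.
have Hc : forall m, (forall g x, law_support P X x ->
    enorm (x - m) <= enorm (x - act g m)) ->
    Fmean P act X m = (\int[P]_w (sq (X w - m))%:E)%E.
  move=> m hm; rewrite /Fmean expE.
  apply: ae_eq_integral => //.
  - by apply/measurable_EFinP; exact: meas_min.
  - by apply/measurable_EFinP; exact: meas_sq.
  - have [N [mN N0 hN]] := support_ae P mX.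
    exists N; split => // w /= hw; apply: hN => HS; apply: hw => _.
    by rewrite (min_cone Hgrp Hlin Hiso) // => g; exact: hm.
have h0 : forall g x, law_support P X x -> enorm (x - t0) <= enorm (x - act g t0).
  by move=> g x Sx; exact: (nbhs_singleton (Sint x Sx)).
apply: filterS (near_cone Hgrp Hlin Hiso cS Sint reg) => m hm.
rewrite (Hc t0 h0) (Hc m hm).
exact: mean_ineq.
Qed.
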